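(* Let $L\subset\mathbb{R}^n$ be an $n$-dimensional lattice and let $P$ be a Delaunay polytope of $L$ with vertex set $V(P)$. Let $$Y(P)=\Big\{y\in\mathbb{Z}^{V(P)}:\ \sum_{v\in V(P)}y(v)v=0,\ \sum_{v\in V(P)}y(v)=0\Big\}.$$ Consider unknowns $d(u,v)$, $u,v\in V(P)$, with $d(u,v)=d(v,u)$ and $d(v,v)=0$. Let $\mathcal{S}_{dist}(P)$ be the system of linear equations $$\sum_{v\in V(P)}y(v)\,d(u,v)=0\qquad\text{for all }y\in Y(P)\text{ and all }u\in V(P),$$ and let $\mathcal{S}_{hyp}(P)$ be the system of all equations $$\sum_{u,v\in V(P)}z(u)z(v)\,d(u,v)=0,\qquad z\in\mathbb{Z}^{V(P)},\ \sum_{v\in V(P)}z(v)=1,$$ that are satisfied by the distance $d_P(u,v)=\|u-v\|^2$. Then the systems $\mathcal{S}_{dist}(P)$ and $\mathcal{S}_{hyp}(P)$ are equivalent, i.e., they have the same solution set.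
   Context: A Delaunay polytope of a lattice $L\subset\mathbb{R}^n$ is a polytope whose vertex set is $L\cap S$, where $S=S(c,r)$ is an empty sphere: $\|a-c\|^2\ge r^2$ for all $a\in L$, and $S\cap L$ contains $n+1$ affinely independent points. *)

(* Defs.v *)
From HB Require Import structures.
From mathcomp Require Import all_boot all_order all_algebra.
Set Implicit Arguments. Unset Strict Implicit. Unset Printing Implicit Defensive.
Import Order.TTheory GRing.Theory Num.Theory.
Local Open Scope ring_scope.

Definition sqnorm (R : realFieldType) (n : nat) (x : 'rV[R]_n) : R :=
  \sum_(i < n) x ord0 i ^+ 2.

(* The lattice generated by the rows of B: { z B : z in Z^n }.
   It is n-dimensional when B is invertible. *)
Definition lattice (R : realFieldType) (n : nat) (B : 'M[R]_n) (x : 'rV[R]_n) : Prop :=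
  exists z : 'rV[int]_n, x = map_mx (fun k : int => k%:~R) z *m B.

Definition aff_indep (R : realFieldType) (n : nat) (w : 'I_n.+1 -> 'rV[R]_n) : Prop :=
  row_free (\matrix_(i < n) (w (lift ord0 i) - w ord0)).

(* the sphere S(c,r) is empty for the lattice and meets it in n+1 affinely
   independent points; its vertex set is L ∩ S. *)
Definition delaunay_sphere (R : realFieldType) (n : nat) (B : 'M[R]_n)
    (c : 'rV[R]_n) (r : R) : Prop :=
  (forall a, lattice B a -> r ^+ 2 <= sqnorm (a - c)) /\
  exists w : 'I_n.+1 -> 'rV[R]_n,
    (forall i, lattice B (w i) /\ sqnorm (w i - c) = r ^+ 2) /\ aff_indep w.

Definition in_Y (R : realFieldType) (n m : nat) (v : 'I_m -> 'rV[R]_n)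
    (y : 'I_m -> int) : Prop :=
  \sum_(i < m) (y i)%:~R *: v i = 0 /\ \sum_(i < m) y i = 0.

Definition S_dist (R : realFieldType) (n m : nat) (v : 'I_m -> 'rV[R]_n)
    (d : 'I_m -> 'I_m -> R) : Prop :=
  forall y : 'I_m -> int, in_Y v y ->
    forall u : 'I_m, \sum_(j < m) (y j)%:~R * d u j = 0.

Definition hyp_form (R : realFieldType) (m : nat) (z : 'I_m -> int)
    (d : 'I_m -> 'I_m -> R) : R :=
  \sum_(i < m) \sum_(j < m) ((z i * z j)%:~R * d i j).

Definition S_hyp (R : realFieldType) (n m : nat) (v : 'I_m -> 'rV[R]_n)
    (d : 'I_m -> 'I_m -> R) : Prop :=
  forall z : 'I_m -> int, \sum_(i < m) z i = 1 ->
    hyp_form z (fun i j => sqnorm (v i - v j)) = 0 ->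
    hyp_form z d = 0.

(* Main.v *)
Require Import Defs.
From HB Require Import structures.
From mathcomp Require Import all_boot all_order all_algebra.
From mathcomp Require Import ring lra.
Import Order.TTheory GRing.Theory Num.Theory.
Local Open Scope ring_scope.

Section Aux.
Variable R : realFieldType.

Lemma quad_k (m : nat) (a x : 'I_m -> R) :
  \sum_i \sum_j a i * a j * (x i - x j) ^+ 2 =
  2 * (\sum_i a i) * (\sum_i a i * x i ^+ 2) - 2 * (\sum_i a i * x i) ^+ 2.
Proof.
rewrite (eq_bigr (fun i => \sum_j (a i * x i ^+ 2 * a j) + \sum_j (a i * (a j * x j ^+ 2))
   - 2 * \sum_j ((a i * x i) * (a j * x j)))); last first.
  move=> i _; rewrite mulr_sumr -big_split -sumrB /=; apply: eq_bigr => j _; ring.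
rewrite sumrB big_split /= -mulr_sumr.
rewrite [in RHS]expr2.
have -> : \sum_i \sum_j a i * x i ^+ 2 * a j = (\sum_i a i) * (\sum_i a i * x i ^+ 2).
  rewrite mulrC mulr_suml; apply: eq_bigr => i _; by rewrite mulr_sumr.
have -> : \sum_i \sum_j a i * (a j * x j ^+ 2) = (\sum_i a i) * (\sum_i a i * x i ^+ 2).
  rewrite mulr_suml; apply: eq_bigr => i _; by rewrite mulr_sumr.
have -> : \sum_i \sum_j (a i * x i) * (a j * x j) = (\sum_i a i * x i) * \sum_j (a j * x j).
  rewrite mulr_suml; apply: eq_bigr => i _; by rewrite mulr_sumr.
ring.
Qed.


Lemma quad_vec (m n : nat) (a : 'I_m -> R) (v : 'I_m -> 'rV[R]_n) (c : 'rV[R]_n) (r : R) :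
  \sum_i a i = 1 -> (forall i, sqnorm (v i - c) = r ^+ 2) ->
  \sum_i \sum_j a i * a j * sqnorm (v i - v j) =
  2 * (r ^+ 2 - sqnorm (\sum_i a i *: v i - c)).
Proof.
move=> s1 hs.
pose x := fun i k => (v i - c) 0 k.
have hv : forall i j, sqnorm (v i - v j) = \sum_k (x i k - x j k) ^+ 2.
  move=> i j; rewrite /sqnorm; apply: eq_bigr => k _; rewrite /x !mxE; congr (_ ^+ 2); ring.
have hc : forall i, \sum_k x i k ^+ 2 = r ^+ 2 by move=> i; rewrite -(hs i).
have hw : sqnorm (\sum_i a i *: v i - c) = \sum_k (\sum_i a i * x i k) ^+ 2.
  rewrite /sqnorm; apply: eq_bigr => k _; congr (_ ^+ 2).
  rewrite !mxE summxE /x.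
  under [in RHS]eq_bigr do rewrite !mxE mulrBr.
  rewrite sumrB -mulr_suml s1 mul1r.
  by under eq_bigr do rewrite !mxE.
rewrite hw.
under eq_bigr do under eq_bigr do rewrite hv mulr_sumr.
under eq_bigr do rewrite exchange_big.
rewrite exchange_big /=.
under eq_bigr do rewrite quad_k.
rewrite sumrB -!mulr_sumr s1 mulr1 exchange_big /=.
under eq_bigr do rewrite -mulr_sumr hc.
by rewrite -mulr_suml s1 mul1r mulrBr.
Qed.


Lemma ind_sum (V : zmodType) (m : nat) (F : 'I_m -> V) (u : 'I_m) :
  \sum_i (if i == u then F i else 0) = F u.
Proof.
rewrite (bigD1 u) //= eqxx big1 ?addr0 // => i /negbTE -> //.
Qed.


Lemma intr_sum (m : nat) (z : 'I_m -> int) :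
  (\sum_i z i)%:~R = \sum_i (z i)%:~R :> R.
Proof. exact: (big_morph (fun k : int => k%:~R : R) (@intrD R) (mulr0z 1)). Qed.

Lemma lat0 (n : nat) (B : 'M[R]_n) : lattice B 0.
Proof.
exists 0; have -> : map_mx (fun k : int => k%:~R : R) (0 : 'rV[int]_n) = 0.
  by apply/matrixP => i j; rewrite !mxE.
by rewrite mul0mx.
Qed.

Lemma latD (n : nat) (B : 'M[R]_n) x y : lattice B x -> lattice B y -> lattice B (x + y).
Proof.
move=> [zx ->] [zy ->]; exists (zx + zy); rewrite -mulmxDl; congr (_ *m _).
by apply/matrixP => i j; rewrite !mxE intrD.
Qed.

Lemma latZ (n : nat) (B : 'M[R]_n) x (k : int) : lattice B x -> lattice B (k%:~R *: x).
Proof.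
move=> [zx ->]; exists (k *: zx); rewrite scalemxAl; congr (_ *m _).
by apply/matrixP => i j; rewrite !mxE intrM.
Qed.

Lemma latsum (n m : nat) (B : 'M[R]_n) (v : 'I_m -> 'rV[R]_n) (z : 'I_m -> int) :
  (forall i, lattice B (v i)) -> lattice B (\sum_i (z i)%:~R *: v i).
Proof.
move=> hv; apply: (big_ind (lattice B)); [exact: lat0 | exact: latD | ].
by move=> i _; apply: latZ.
Qed.

End Aux.
Arguments ind_sum {V m} F u.

Theorem lemma2 (R : realFieldType) (n : nat) (B : 'M[R]_n) (c : 'rV[R]_n) (r : R)
    (m : nat) (v : 'I_m -> 'rV[R]_n) :
  B \in unitmx ->
  delaunay_sphere B c r ->
  injective v ->
  (forall a : 'rV[R]_n,
      (exists i, v i = a) <-> (lattice B a /\ sqnorm (a - c) = r ^+ 2)) ->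
  forall d : 'I_m -> 'I_m -> R,
    (forall i j, d i j = d j i) -> (forall i, d i i = 0) ->
    (S_dist v d <-> S_hyp v d).
Proof.
move=> _ _ _ Hv d dsym d0.
have Hs : forall i, sqnorm (v i - c) = r ^+ 2 :=
  fun i => ((Hv (v i)).1 (ex_intro _ i erefl)).2.
have Hl : forall i, lattice B (v i) :=
  fun i => ((Hv (v i)).1 (ex_intro _ i erefl)).1.
have Hq : forall z : 'I_m -> int, \sum_i z i = 1 ->
    hyp_form z (fun i j => sqnorm (v i - v j)) =
    2 * (r ^+ 2 - sqnorm (\sum_i (z i)%:~R *: v i - c)).
  move=> z sz; rewrite /hyp_form.
  under eq_bigr do under eq_bigr do rewrite intrM.
  by apply: quad_vec => //; rewrite -intr_sum sz.
split.
- move=> HD z sz hz.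
  rewrite Hq // in hz.
  have hw : sqnorm (\sum_i (z i)%:~R *: v i - c) = r ^+ 2 by lra.
  have [k hk] := (Hv _).2 (conj (@latsum R n m B v z Hl) hw).
  pose y i := z i - (if i == k then 1 else 0).
  have hy : in_Y v y.
    split.
      under eq_bigr do rewrite intrB scalerBl.
      rewrite sumrB -hk.
      have -> : \sum_i ((if i == k then 1 else 0 : int)%:~R *: v i) = v k.
        rewrite -[RHS](ind_sum v k); apply: eq_bigr => i _.
        by case: eqP => _; rewrite ?mulr1z ?mulr0z ?scale1r ?scale0r.
      by rewrite subrr.
    by rewrite sumrB sz (ind_sum (fun _ : 'I_m => (1:int)) k) subrr.
  have H1 : forall u, \sum_j (z j)%:~R * d u j = d u k.
    move=> u; have := HD y hy u.
    under eq_bigr do rewrite intrB mulrBl.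
    rewrite sumrB => /eqP; rewrite subr_eq0 => /eqP ->.
    rewrite -[RHS](ind_sum (fun j => d u j) k); apply: eq_bigr => j _.
    by case: eqP => _; rewrite ?mulr1z ?mulr0z ?mul1r ?mul0r.
  rewrite /hyp_form.
  under eq_bigr do under eq_bigr do rewrite intrM -mulrA.
  under eq_bigr do rewrite -mulr_sumr H1 dsym.
  by rewrite H1 d0.
- move=> HH y [hy1 hy2] u.
  pose e i : int := if i == u then 1 else 0.
  have he : forall F : 'I_m -> R, \sum_i (e i)%:~R * F i = F u.
    move=> F; rewrite -[RHS](ind_sum F u); apply: eq_bigr => j _.
    by rewrite /e; case: eqP => _; rewrite ?mulr1z ?mulr0z ?mul1r ?mul0r.
  have key : forall t : int, \sum_i \sum_j ((e i)%:~R + t%:~R * (y i)%:~R) *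
        ((e j)%:~R + t%:~R * (y j)%:~R) * d i j = 0.
    move=> t.
    have sz : \sum_i (e i + t * y i) = 1.
      rewrite big_split /= -mulr_sumr hy2 mulr0 addr0.
      exact: (ind_sum (fun _ : 'I_m => (1:int)) u).
    transitivity (hyp_form (fun i => e i + t * y i) d).
      rewrite /hyp_form; apply: eq_bigr => i _; apply: eq_bigr => j _.
      by rewrite intrM !intrD !intrM.
    apply (HH _ sz).
    rewrite (Hq _ sz).
    have -> : \sum_i (e i + t * y i)%:~R *: v i = v u.
      under eq_bigr do rewrite intrD intrM scalerDl -scalerA.
      rewrite big_split /= -scaler_sumr hy1 scaler0 addr0.
      rewrite -[RHS](ind_sum v u); apply: eq_bigr => i _.
      by rewrite /e; case: eqP => _; rewrite ?mulr1z ?mulr0z ?scale1r ?scale0r.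
    by rewrite Hs subrr mulr0.
  have := key 1; have := key (-1).
  rewrite mulr1z mulrN1z => h2 h1.
  have E : \sum_i (2 * ((e i)%:~R * \sum_j (y j)%:~R * d i j) +
                   2 * ((y i)%:~R * \sum_j (e j)%:~R * d i j)) = 0.
    rewrite -[RHS](subrr (0:R)) -[X in _ = X - _]h1 -[X in _ = _ - X]h2 -sumrB.
    apply: eq_bigr => i _.
    rewrite !mulr_sumr -big_split -sumrB /=; apply: eq_bigr => j _; ring.
  rewrite big_split /= -!mulr_sumr he in E.
  have E2 : \sum_i (y i)%:~R * \sum_j (e j)%:~R * d i j = \sum_j (y j)%:~R * d u j.
    by apply: eq_bigr => i _; rewrite he dsym.
  rewrite E2 in E.
  lra.
Qed.
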